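(* Let $\Delta=\Delta_1+\cdots+\Delta_r\subseteq M_{\mathbb R}$ be a proper centered nef-partition of a reflexive polytope $\Delta$. Call a nonempty subset $I\subseteq\{1,\dots,r\}$ irreducible if $\Delta^I:=\sum_{i\in I}\Delta_i$ contains $0$ in its relative interior and $I$ is minimal (with respect to inclusion) with this property. Then any two distinct irreducible subsets of $\{1,\dots,r\}$ are disjoint.
   Context: $M\cong\mathbb Z^d$, $N$ dual lattice. A reflexive polytope $\Delta\subseteq M_{\mathbb R}$ is a lattice polytope with $0$ in its interior whose polar $\{y:\langle x,y\rangle\ge-1\ \forall x\in\Delta\}$ is a lattice polytope. A centered nef-partition of $\Delta$ is a decomposition $\Delta=\Delta_1+\cdots+\Delta_r$ into lattice polytopes with $0\in\Delta_i$ for all $i$; it is proper if $\dim\Delta_i>0$ for all $i$. *)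

(* Defs.v *)
(* M = Z^d inside M_R = R^d (row vectors), N = Z^d with the
   standard pairing <x,y> = \sum_i x_i y_i. R is an arbitrary realType
   (a model of the real numbers). *)
From HB Require Import structures.
From mathcomp Require Import all_boot all_order all_algebra.
From mathcomp Require Import reals.
Set Implicit Arguments. Unset Strict Implicit. Unset Printing Implicit Defensive.
Import Order.TTheory GRing.Theory Num.Theory.
Local Open Scope ring_scope.

Section Defs.
Variables (R : realType) (d : nat).
Notation pt := 'rV[R]_d.

Definition pairing (x y : pt) : R := \sum_(i < d) x 0 i * y 0 i.

Definition lattice_pt (x : pt) : Prop := forall i, x 0 i \is a Num.int.

Definition conv (S : seq pt) : pt -> Prop := fun x =>
  exists w : 'I_(size S) -> R,
    (forall k, 0 <= w k) /\ \sum_k w k = 1 /\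
    x = \sum_k w k *: nth 0 S k.

Definition lattice_polytope (P : pt -> Prop) : Prop :=
  exists S : seq pt, (forall v, v \in S -> lattice_pt v) /\
                     (forall x, P x <-> conv S x).

Definition aff_hull (P : pt -> Prop) : pt -> Prop := fun x =>
  exists (S : seq pt) (w : 'I_(size S) -> R),
    (forall v, v \in S -> P v) /\ \sum_k w k = 1 /\
    x = \sum_k w k *: nth 0 S k.

Definition near_pt (e : R) (x y : pt) : Prop := forall i, `|x 0 i - y 0 i| < e.

Definition interior (P : pt -> Prop) : pt -> Prop := fun x =>
  exists2 e : R, 0 < e & forall y, near_pt e x y -> P y.

Definition rel_interior (P : pt -> Prop) : pt -> Prop := fun x =>
  P x /\ exists2 e : R, 0 < e &
    forall y, aff_hull P y -> near_pt e x y -> P y.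

Definition polar (P : pt -> Prop) : pt -> Prop := fun y =>
  forall x, P x -> - 1 <= pairing x y.

Definition reflexive (P : pt -> Prop) : Prop :=
  lattice_polytope P /\ interior P 0 /\ lattice_polytope (polar P).

(* Minkowski sum of the family (D i)_{i in I}; equals {0} for I empty *)
Definition mink_sum (r : nat) (D : 'I_r -> pt -> Prop) (I : {set 'I_r}) :
  pt -> Prop := fun x =>
  exists f : 'I_r -> pt, (forall i, i \in I -> D i (f i)) /\
                         x = \sum_(i in I) f i.

Definition proper_centered_nef_partition (Delta : pt -> Prop) (r : nat)
  (D : 'I_r -> pt -> Prop) : Prop :=
  reflexive Delta /\
  (forall i, lattice_polytope (D i)) /\
  (forall x, Delta x <-> mink_sum D [set: 'I_r] x) /\
  (forall i, D i 0) /\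
  (* dim Delta_i > 0: Delta_i contains two distinct points *)
  (forall i, exists x y, D i x /\ D i y /\ x <> y).

Definition has_zero_relint (r : nat) (D : 'I_r -> pt -> Prop)
  (I : {set 'I_r}) : Prop := rel_interior (mink_sum D I) 0.

Definition irreducible (r : nat) (D : 'I_r -> pt -> Prop) (I : {set 'I_r}) :
  Prop :=
  I != set0 /\ has_zero_relint D I /\
  (forall J : {set 'I_r}, J != set0 -> J \proper I -> ~ has_zero_relint D J).

End Defs.

(* Main.v *)
Require Import Defs.
From HB Require Import structures.
From mathcomp Require Import all_boot all_order all_algebra.
From mathcomp Require Import reals.
From mathcomp Require Import ring lra.
Set Implicit Arguments. Unset Strict Implicit. Unset Printing Implicit Defensive.
Import Order.TTheory GRing.Theory Num.Theory.
Local Open Scope ring_scope.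

Section Aux.
Variables (R : realType) (d : nat).
Notation pt := 'rV[R]_d.
Implicit Types (x y z v : pt).

Lemma pairingC x y : pairing x y = pairing y x.
Proof. by apply: eq_bigr => i _; rewrite mulrC. Qed.

Lemma pairingDl x y z : pairing (x + y) z = pairing x z + pairing y z.
Proof. by rewrite /pairing -big_split; apply: eq_bigr => i _; rewrite mxE mulrDl. Qed.

Lemma pairingZl a x z : pairing (a *: x) z = a * pairing x z.
Proof. by rewrite /pairing mulr_sumr; apply: eq_bigr => i _; rewrite mxE mulrA. Qed.

Lemma pairing0l z : pairing 0 z = 0.
Proof. by rewrite /pairing big1 // => i _; rewrite mxE mul0r. Qed.

Lemma pairingNl x z : pairing (- x) z = - pairing x z.
Proof. by rewrite -scaleN1r pairingZl mulN1r. Qed.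

Lemma pairingBl x y z : pairing (x - y) z = pairing x z - pairing y z.
Proof. by rewrite pairingDl pairingNl. Qed.

Lemma pairing_sum (I : Type) (s : seq I) (P : pred I) (F : I -> pt) z :
  pairing (\sum_(i <- s | P i) F i) z = \sum_(i <- s | P i) pairing (F i) z.
Proof.
exact: (big_morph (fun x => pairing x z) (fun x y => pairingDl x y z) (pairing0l z)).
Qed.

Lemma pairing_conv (S : seq pt) (w : 'I_(size S) -> R) z :
  pairing (\sum_k w k *: nth 0 S k) z = \sum_k w k * pairing (nth 0 S k) z.
Proof. by rewrite pairing_sum; apply: eq_bigr => k _; rewrite pairingZl. Qed.

Lemma pairing_int x y : lattice_pt x -> lattice_pt y -> pairing x y \is a Num.int.
Proof. by move=> hx hy; apply: rpred_sum => i _; apply: rpredM. Qed.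

Lemma int_neg (a : R) : a \is a Num.int -> a < 0 -> a <= -1.
Proof.
move=> ha hlt; have := norm_intr_ge1 ha (ltr0_neq0 hlt).
by rewrite ltr0_norm // lerNr.
Qed.

Lemma conv_nth (S : seq pt) (k : 'I_(size S)) : conv S (nth 0 S k).
Proof.
exists (fun j => (j == k)%:R); split; first by move=> j; exact: ler0n.
split.
  by rewrite (bigD1 k) //= eqxx big1 ?addr0 // => j /negbTE ->.
by rewrite (bigD1 k) //= eqxx scale1r big1 ?addr0 // => j /negbTE ->; rewrite scale0r.
Qed.

Lemma neg_lattice (P : pt -> Prop) x v : lattice_polytope P -> P x ->
  lattice_pt v -> pairing x v < 0 -> exists s, P s /\ pairing s v <= -1.
Proof.
case=> S [hS hP] /hP [w [w0 [w1 ->]]] hv; rewrite pairing_conv => hlt.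
case: (boolP [exists k : 'I_(size S), pairing (nth 0 S k) v < 0]) => [/existsP [k hk]| /existsPn hall].
  exists (nth 0 S k); split; first by apply/hP; apply: conv_nth.
  apply: int_neg hk; apply: pairing_int hv; apply: hS; apply: mem_nth; exact: ltn_ord.
exfalso.
have : 0 <= \sum_k w k * pairing (nth 0 S k) v.
  by apply: sumr_ge0 => k _; apply: mulr_ge0 => //; rewrite leNgt; apply: hall.
by rewrite leNgt hlt.
Qed.

Lemma mink_nonneg r (D : 'I_r -> pt -> Prop) (I : {set 'I_r}) v x :
  (forall i, i \in I -> forall y, D i y -> 0 <= pairing y v) ->
  mink_sum D I x -> 0 <= pairing x v.
Proof.
move=> hv [f [hf ->]]; rewrite pairing_sum; apply: sumr_ge0 => i hi.
exact: hv _ hi _ (hf _ hi).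
Qed.

Lemma mink_mono r (D : 'I_r -> pt -> Prop) (K I : {set 'I_r}) x :
  (forall i, D i 0) -> K \subset I -> mink_sum D K x -> mink_sum D I x.
Proof.
move=> hD0 hKI [f [hf ->]].
exists (fun i => if i \in K then f i else 0); split.
  by move=> i _; case: ifP => // /hf.
rewrite [RHS](big_setID K) /= (setIidPr hKI) [X in _ = _ + X]big1 ?addr0.
  by apply: eq_bigr => i ->.
by move=> i; rewrite inE => /andP [/negbTE -> _].
Qed.

Lemma aff_mono (P Q : pt -> Prop) y :
  (forall x, P x -> Q x) -> aff_hull P y -> aff_hull Q y.
Proof. by move=> hPQ [S [w [hS hw]]]; exists S, w; split=> // v /hS /hPQ. Qed.

Lemma le_sum_abs x i : `|x 0 i| <= \sum_j `|x 0 j|.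
Proof.
by rewrite (bigD1 i) //= lerDl; apply: sumr_ge0 => j _; exact: normr_ge0.
Qed.

Lemma relint_neg (P : pt -> Prop) x : rel_interior P 0 -> P x ->
  exists2 t : R, 0 < t & P ((- t) *: x).
Proof.
move=> [P0 [e e0 he]] Px.
set M := 1 + \sum_j `|x 0 j|.
have M0 : 0 < M by rewrite /M ltr_wpDr // sumr_ge0 // => j _; exact: normr_ge0.
exists (e / M); first by rewrite divr_gt0.
apply: he.
  exists [:: x; 0], (fun k : 'I_2 => if k == ord0 then - (e / M) else 1 + e / M).
  split; first by move=> u; rewrite !inE => /orP [/eqP->|/eqP->].
  split; first by rewrite big_ord_recl big_ord1 /=; lra.
  by rewrite big_ord_recl big_ord1 /= scaler0 addr0.
move=> i; rewrite !mxE sub0r normrN normrM normrN (gtr0_norm (divr_gt0 e0 M0)).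
rewrite mulrAC ltr_pdivrMr // ltr_pM2l //.
by rewrite /M (le_lt_trans (le_sum_abs x i)) // ltrDr.
Qed.

Lemma pairing_self_gt0 (w : pt) : w != 0 -> 0 < pairing w w.
Proof.
move=> hw; have hge : forall i : 'I_d, true -> 0 <= w 0 i * w 0 i.
  by move=> i _; rewrite -expr2 sqr_ge0.
rewrite lt_def (sumr_ge0 _ hge) andbT; apply/eqP => h.
move/eqP: hw; apply; apply/matrixP => a b.
rewrite (ord1 a) !mxE.
have /eqP := @psumr_eq0P _ _ _ _ hge h b erefl.
by rewrite mulf_eq0 orbb => /eqP.
Qed.

Lemma zero_lemma (Delta : pt -> Prop) (w : pt) : lattice_polytope Delta ->
  lattice_polytope (polar Delta) ->
  (forall v, lattice_pt v -> polar Delta v -> 0 <= pairing w v) -> w = 0.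
Proof.
case=> S [_ hD] [V [hV hP]] hw.
apply/eqP; apply/negPn/negP => hw0.
set B := \sum_(k < size S) `|pairing (nth 0 S k) w|.
have B0 : 0 <= B by apply: sumr_ge0 => k _; exact: normr_ge0.
have B1 : 0 < 1 + B by rewrite ltr_wpDr.
set t := (1 + B)^-1.
have t0 : 0 < t by rewrite /t invr_gt0.
have tB : t * (1 + B) = 1 by rewrite mulVf // gt_eqF.
have hu : polar Delta ((- t) *: w).
  move=> x /hD [l [l0 [l1 ->]]].
  rewrite pairingC pairingZl pairingC pairing_conv.
  have hs : \sum_k l k * pairing (nth 0 S k) w <= B.
    apply: (@le_trans _ _ (\sum_k l k * B)); last by rewrite -mulr_suml l1 mul1r.
    apply: ler_sum => k _; apply: ler_wpM2l => //; apply: le_trans (ler_norm _) _.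
    by rewrite /B (bigD1 k) //= lerDl sumr_ge0 // => j _; exact: normr_ge0.
  nra.
have [mu [mu0 [mu1 hue]]] := (hP _).1 hu.
have : 0 <= pairing w ((- t) *: w).
  rewrite hue pairingC pairing_conv; apply: sumr_ge0 => k _; apply: mulr_ge0 => //.
  rewrite pairingC; apply: hw.
    by apply: hV; apply: mem_nth; exact: ltn_ord.
  by apply/hP; exact: conv_nth.
rewrite pairingC pairingZl. have := pairing_self_gt0 hw0. nra.
Qed.

Section Nef.
Variables (r : nat) (Delta : pt -> Prop) (D : 'I_r -> pt -> Prop).
Hypotheses (hDl : forall i, lattice_polytope (D i))
  (hDs : forall x, Delta x <-> mink_sum D [set: 'I_r] x)
  (hD0 : forall i, D i 0).

Lemma unique_neg v j0 j1 x0 x1 : lattice_pt v -> polar Delta v ->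
  j0 != j1 -> D j0 x0 -> D j1 x1 -> pairing x0 v < 0 -> pairing x1 v < 0 -> False.
Proof.
move=> hv hpv hj h0 h1 n0 n1.
have [s0 [hs0 ls0]] := neg_lattice (hDl j0) h0 hv n0.
have [s1 [hs1 ls1]] := neg_lattice (hDl j1) h1 hv n1.
have hD : Delta (s0 + s1).
  apply/hDs; exists (fun i => if i == j0 then s0 else if i == j1 then s1 else 0).
  split.
    by move=> i _; case: ifP => [/eqP->|_] //; case: ifP => [/eqP->|_].
  rewrite (bigD1 j0) ?inE //= eqxx (bigD1 j1) /=; last by rewrite inE eq_sym.
  rewrite eq_sym (negbTE hj) eqxx big1 ?addr0 //.
  by move=> i /andP [/andP [_ hi0] hi1]; rewrite (negbTE hi0) (negbTE hi1).
have := hpv _ hD; rewrite pairingDl; lra.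
Qed.

Lemma vanish (J : {set 'I_r}) v : has_zero_relint D J ->
  (forall j, j \in J -> forall x, D j x -> 0 <= pairing x v) ->
  forall x, mink_sum D J x -> pairing x v = 0.
Proof.
move=> hJ hnn x hx; have h1 := mink_nonneg hnn hx.
have [t t0 htx] := relint_neg hJ hx.
have h2 := mink_nonneg hnn htx; rewrite pairingZl mulNr oppr_ge0 pmulr_rle0 // in h2.
by apply/eqP; rewrite eq_le h1 h2.
Qed.

Hypotheses (hlat : lattice_polytope Delta) (hpol : lattice_polytope (polar Delta)).

Lemma relint_cap (I J : {set 'I_r}) : has_zero_relint D I -> has_zero_relint D J ->
  has_zero_relint D (I :&: J).
Proof.
move=> [_ [eI eI0 hI]] hJ; split.
  by exists (fun _ => 0); split=> [i _|]; [apply: hD0 | rewrite big1].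
exists eI => // y hy hn.
have [a [ha hya]] : mink_sum D I y.
  by apply: hI hn; apply: aff_mono hy => x; apply: mink_mono => //; exact: subsetIl.
set w := \sum_(i in I :\: J) a i.
set s := \sum_(i in I :&: J) a i.
have hsplit : y = s + w by rewrite hya (big_setID J).
have hsK : mink_sum D (I :&: J) s.
  by exists a; split=> // i; rewrite inE => /andP [hi _]; exact: ha.
suff w0 : w = 0 by rewrite hsplit w0 addr0.
apply: (zero_lemma hlat hpol) => v hv hpv.
case: (boolP [exists j in I :\: J, pairing (a j) v < 0]) =>
  [/exists_inP [j0 hj0 hneg] | /exists_inP hn'].
  have hJnn : forall j, j \in J -> forall x, D j x -> 0 <= pairing x v.
    move=> j hj x hx; rewrite leNgt; apply/negP => hlt.
    have hj0j : j0 != j.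
      apply/eqP => e; move: hj0; rewrite inE e hj //.
    have hj0I : j0 \in I by move: hj0; rewrite inE => /andP [].
    exact: (unique_neg hv hpv hj0j (ha _ hj0I) hx hneg hlt).
  have hvan := vanish hJ hJnn.
  have -> : w = y - s by rewrite hsplit (addrC s w) addrK.
  rewrite pairingBl (hvan _ (mink_mono hD0 (subsetIr I J) hsK)).
  case: hy => S [ww [hS [_ ->]]]; rewrite pairing_conv big1 ?subrr //.
  move=> k _; rewrite (hvan _ (mink_mono hD0 (subsetIr I J) (hS _ _))) ?mulr0 //.
  by apply: mem_nth; exact: ltn_ord.
rewrite pairing_sum; apply: sumr_ge0 => j hj; rewrite leNgt; apply/negP => h.
by apply: hn'; exists j.
Qed.

End Nef.

End Aux.

Theorem proposition6p12 (R : realType) (d r : nat)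
  (Delta : 'rV[R]_d -> Prop) (D : 'I_r -> 'rV[R]_d -> Prop) :
  proper_centered_nef_partition Delta D ->
  forall I J : {set 'I_r},
    irreducible D I -> irreducible D J -> I != J -> [disjoint I & J].
Proof.
move=> [[hlat [_ hpol]] [hDl [hDs [hD0 _]]]] I J [hI0 [hIr hImin]] [hJ0 [hJr hJmin]] hIJ.
rewrite -setI_eq0; apply/negPn/negP => hK.
have hrel := relint_cap hDl hDs hD0 hlat hpol hIr hJr.
case: (boolP ((I :&: J) \proper I)) => hp; first exact: hImin _ hK hp hrel.
have eI : I :&: J = I.
  apply/eqP; rewrite eqEsubset subsetIl /=.
  by move: hp; rewrite properE subsetIl /= => /negPn.
have hp2 : (I :&: J) \proper J.
  by rewrite eI properEneq hIJ /= -eI subsetIr.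
exact: hJmin _ hK hp2 hrel.
Qed.
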